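(* Let $1<q\le p<r\le s<\infty$ and let $\mu$ be a finite measure on $(X,\Sigma)$, $X=(0,1)$. If $L^{p,q)}(X,\mu)\subseteq L^{r,s)}(X,\mu)$, then there is a constant $M>0$ such that $\mu(A)\ge M$ for every $A\in\Sigma$ with $\mu(A)>0$.
   Context: $X=(0,1)$ with a $\sigma$-algebra $\Sigma$. For a measurable $f$ on $X$, $\lambda_f(y)=\mu\{x:|f(x)|>y\}$ ($y>0$) and $f^*(t)=\inf\{y>0:\lambda_f(y)\le t\}$ ($t>0$). For $1<p<\infty$, $1<q<\infty$, $L^{p,q)}(X,\mu)$ consists of measurable $f$ with $\|f\|_{p,q),\mu}=\sup_{0<\varepsilon<q-1}\big(\frac qp\varepsilon\int_0^1 t^{\frac qp-1}[f^*(t)]^{q-\varepsilon}dt\big)^{1/(q-\varepsilon)}<\infty$; $L^{r,s)}(X,\mu)$ is defined likewise with $r,s$. *)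

(* Defs.v *)
From Stdlib Require Import Reals Lra ClassicalEpsilon.
Open Scope R_scope.

Definition X : Type := { x : R | 0 < x < 1 }.

Record sigma_algebra (Sigma : (X -> Prop) -> Prop) : Prop := {
  sa_full  : Sigma (fun _ => True);
  sa_compl : forall A, Sigma A -> Sigma (fun x => ~ A x);
  sa_union : forall A : nat -> X -> Prop,
      (forall n, Sigma (A n)) -> Sigma (fun x => exists n, A n x)
}.

Record finite_measure (Sigma : (X -> Prop) -> Prop) (mu : (X -> Prop) -> R) : Prop := {
  fm_nonneg : forall A, Sigma A -> 0 <= mu A;
  fm_empty  : mu (fun _ => False) = 0;
  fm_sigma_additive : forall A : nat -> X -> Prop,
      (forall n, Sigma (A n)) ->
      (forall n m x, n <> m -> A n x -> A m x -> False) ->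
      infinite_sum (fun n => mu (A n)) (mu (fun x => exists n, A n x))
}.

Definition measurable (Sigma : (X -> Prop) -> Prop) (f : X -> R) : Prop :=
  forall a : R, Sigma (fun x => a < f x).

Definition distrib (mu : (X -> Prop) -> R) (f : X -> R) (y : R) : R :=
  mu (fun x => y < Rabs (f x)).

(* greatest lower bound; infimum (0 if it does not exist, never used here) *)
Definition is_glb (E : R -> Prop) (m : R) : Prop :=
  (forall x, E x -> m <= x) /\ (forall b, (forall x, E x -> b <= x) -> b <= m).

Definition Rinf (E : R -> Prop) : R :=
  match excluded_middle_informative (exists m, is_glb E m) with
  | left H => proj1_sig (constructive_indefinite_description _ H)
  | right _ => 0
  end.

Definition fstar (mu : (X -> Prop) -> R) (f : X -> R) (t : R) : R :=
  Rinf (fun y => 0 < y /\ distrib mu f y <= t).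

(* real power with the convention 0^a = 0 (a > 0 in all uses) *)
Definition rpow (x a : R) : R := if Rle_dec x 0 then 0 else Rpower x a.

Definition gl_integrand (mu : (X -> Prop) -> R) (p q eps : R) (f : X -> R) (t : R) : R :=
  rpow t (q / p - 1) * rpow (fstar mu f t) (q - eps).

(* ||f||_{p,q),mu} <= C, where the (nonnegative, improper at 0) integral
   over (0,1) is the supremum over delta in (0,1) of the Riemann integrals
   over [delta,1] (the integrand is Riemann integrable there) *)
Definition gl_norm_le (mu : (X -> Prop) -> R) (p q : R) (f : X -> R) (C : R) : Prop :=
  forall eps, 0 < eps < q - 1 ->
  forall delta, 0 < delta < 1 ->
  exists pr : Riemann_integrable (gl_integrand mu p q eps f) delta 1,
    rpow (q / p * eps * RiemannInt pr) (1 / (q - eps)) <= C.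

Definition in_GL (Sigma : (X -> Prop) -> Prop) (mu : (X -> Prop) -> R)
    (p q : R) (f : X -> R) : Prop :=
  measurable Sigma f /\ exists C : R, gl_norm_le mu p q f C.

(* Main.v *)
Require Import Defs.
From Stdlib Require Import Reals Lra Lia Arith Wf_nat ClassicalEpsilon Classical FunctionalExtensionality PropExtensionality.
Open Scope R_scope.

Lemma pred_ext (A B : X -> Prop) : (forall x, A x <-> B x) -> A = B.
Proof. intros H; apply functional_extensionality; intro x; apply propositional_extensionality; auto. Qed.

Lemma S_empty Sg : sigma_algebra Sg -> Sg (fun _ => False).
Proof.
  intros H. replace (fun _:X => False) with (fun x:X => ~ (fun _ : X => True) x).
  - apply (sa_compl _ H), (sa_full _ H).
  - apply pred_ext; tauto.
Qed.

Lemma S_cond Sg (P : Prop) A : sigma_algebra Sg -> Sg A -> Sg (fun x => P /\ A x).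
Proof.
  intros H HA. destruct (classic P) as [HP|HP].
  - replace (fun x => P /\ A x) with A; auto. apply pred_ext; tauto.
  - replace (fun x => P /\ A x) with (fun _:X => False). apply S_empty; auto. apply pred_ext; tauto.
Qed.

Lemma S_or Sg A B : sigma_algebra Sg -> Sg A -> Sg B -> Sg (fun x => A x \/ B x).
Proof.
  intros H HA HB.
  replace (fun x => A x \/ B x) with (fun x => exists n, (fun n => match n with O => A | _ => B end) n x).
  - apply (sa_union _ H). intros [|n]; auto.
  - apply pred_ext; intro x; split.
    + intros [[|n] Hn]; auto.
    + intros [Ha|Hb]; [exists O|exists 1%nat]; auto.
Qed.

Lemma S_and Sg A B : sigma_algebra Sg -> Sg A -> Sg B -> Sg (fun x => A x /\ B x).
Proof.
  intros H HA HB.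
  replace (fun x => A x /\ B x) with (fun x => ~ ((fun x => ~ A x) x \/ (fun x => ~ B x) x)).
  - apply (sa_compl _ H). apply S_or; auto; apply (sa_compl _ H); auto.
  - apply pred_ext; intro x; tauto.
Qed.

Lemma S_not Sg A : sigma_algebra Sg -> Sg A -> Sg (fun x => ~ A x).
Proof. intros H HA; apply (sa_compl _ H); auto. Qed.

Lemma S_all Sg (A : nat -> X -> Prop) : sigma_algebra Sg -> (forall n, Sg (A n)) -> Sg (fun x => forall n, A n x).
Proof.
  intros H HA.
  replace (fun x => forall n, A n x) with (fun x => ~ (exists n, (fun n x => ~ A n x) n x)).
  - apply (sa_compl _ H). apply (sa_union _ H). intro n; apply S_not; auto.
  - apply pred_ext; intro x; split.
    + intros Hx n. apply NNPP. intro Hn. apply Hx. exists n; auto.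
    + intros Hx [n Hn]; auto.
Qed.

Lemma mu_add2 Sg mu A B : sigma_algebra Sg -> finite_measure Sg mu -> Sg A -> Sg B ->
  (forall x, A x -> B x -> False) -> mu (fun x => A x \/ B x) = mu A + mu B.
Proof.
  intros HS Hm HA HB Hd.
  set (s := fun n : nat => match n with O => A | 1%nat => B | _ => fun _ : X => False end).
  assert (Hs : forall n, Sg (s n)).
  { intros [|[|n]]; simpl; auto. apply S_empty; auto. }
  assert (Hdis : forall n m x, n <> m -> s n x -> s m x -> False).
  { intros [|[|n]] [|[|m]] x Hnm; simpl; try tauto; intros; eauto. }
  pose proof (fm_sigma_additive _ _ Hm s Hs Hdis) as Hsum.
  replace (fun x => exists n, s n x) with (fun x => A x \/ B x) in Hsum.
  2:{ apply pred_ext; intro x; split.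
      - intros [Ha|Hb]; [exists O|exists 1%nat]; auto.
      - intros [[|[|n]] Hn]; simpl in Hn; tauto. }
  apply (uniqueness_sum (fun n => mu (s n))); auto.
  assert (Hp : forall n, sum_f_R0 (fun n => mu (s n)) (Datatypes.S n) = mu A + mu B).
  { induction n.
    - simpl. ring.
    - change (sum_f_R0 (fun n => mu (s n)) (Datatypes.S n) + mu (fun _ => False) = mu A + mu B).
      rewrite IHn, (fm_empty _ _ Hm). ring. }
  intros eps He. exists 1%nat. intros n Hn. destruct n as [|n]; [lia|].
  rewrite Hp. unfold R_dist. replace (mu A + mu B - (mu A + mu B)) with 0 by ring.
  rewrite Rabs_R0; auto.
Qed.

Lemma mu_mono Sg mu A B : sigma_algebra Sg -> finite_measure Sg mu -> Sg A -> Sg B ->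
  (forall x, A x -> B x) -> mu A <= mu B.
Proof.
  intros HS Hm HA HB Hab.
  replace B with (fun x => A x \/ (fun x => B x /\ ~ A x) x).
  - assert (HBA : Sg (fun x => B x /\ ~ A x)) by (apply S_and; auto; apply S_not; auto).
    rewrite (mu_add2 Sg mu A (fun x => B x /\ ~ A x)); auto.
    2:{ intros x Ha [_ Hn]; auto. }
    pose proof (fm_nonneg _ _ Hm _ HBA). lra.
  - apply pred_ext; intro x; split.
    + intros [Ha|[Hb _]]; auto.
    + intros Hb. destruct (classic (A x)); auto.
Qed.

Lemma sum_le_lim (a : nat -> R) l M : infinite_sum a l -> (forall N, sum_f_R0 a N <= M) -> l <= M.
Proof.
  intros Hl HM. destruct (Rle_lt_dec l M) as [h|h]; auto.
  destruct (Hl (l - M)) as [N HN]; [lra|].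
  specialize (HN N (le_n N)). unfold R_dist in HN. apply Rabs_def2 in HN.
  specialize (HM N). lra.
Qed.

Lemma mu_subadd Sg mu (A : nat -> X -> Prop) (u : nat -> R) M :
  sigma_algebra Sg -> finite_measure Sg mu -> (forall n, Sg (A n)) ->
  (forall n, mu (A n) <= u n) -> (forall N, sum_f_R0 u N <= M) ->
  mu (fun x => exists n, A n x) <= M.
Proof.
  intros HS Hm HA Hu HM.
  set (E := fun n x => A n x /\ ~ (exists j, (j < n)%nat /\ A j x)).
  assert (HE : forall n, Sg (E n)).
  { intro n. apply S_and; auto. apply S_not; auto. apply (sa_union _ HS). intro j. apply S_cond; auto. }
  assert (Hd : forall n m x, n <> m -> E n x -> E m x -> False).
  { intros n m x Hnm [Hn Hn'] [Hm1 Hm']. destruct (Nat.lt_ge_cases n m).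
    - apply Hm'. exists n; auto.
    - apply Hn'. exists m; split; auto; lia. }
  pose proof (fm_sigma_additive _ _ Hm E HE Hd) as Hsum.
  replace (fun x => exists n, E n x) with (fun x => exists n, A n x) in Hsum.
  2:{ apply pred_ext; intro x; split.
      - intros [n Hn]. revert Hn. induction n as [n IH] using lt_wf_ind. intro Hn.
        destruct (classic (exists j, (j < n)%nat /\ A j x)) as [[j [Hj Hj']]|Hno].
        + apply (IH j); auto.
        + exists n. split; auto.
      - intros [n [Hn _]]; exists n; auto. }
  apply (sum_le_lim _ _ _ Hsum). intro N. apply Rle_trans with (sum_f_R0 u N); auto.
  apply sum_Rle. intros n _. apply Rle_trans with (mu (A n)); auto.
  apply (mu_mono Sg); auto. intros x [h _]; auto.
Qed.

Lemma geom_sum k N : sum_f_R0 (fun n => (/2)^(S (k+n))) N = (/2)^k - (/2)^(S (k+N)).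
Proof.
  induction N.
  - simpl. rewrite Nat.add_0_r. lra.
  - change (sum_f_R0 (fun n => (/2)^(S (k+n))) N + (/2)^(S (k + S N)) = (/2)^k - (/2)^(S (k+ S N))).
    rewrite IHN. rewrite Nat.add_succ_r. simpl. lra.
Qed.

Lemma half_pow_pos k : 0 < (/2)^k.
Proof. apply pow_lt; lra. Qed.

Lemma half_pow_le1 k : (/2)^k <= 1.
Proof. induction k; simpl; lra. Qed.
Definition V (B : nat -> X -> Prop) k x := exists n, (k <= n)%nat /\ B n x.
Definition Lset B x := forall k, V B k x.
Definition W B k x := V B k x /\ ~ Lset B x.
Definition D B k x := V B k x /\ ~ V B (S k) x.

Definition goodB Sg (mu : (X -> Prop) -> R) B :=
  forall n, Sg (B n) /\ 0 < mu (B n) /\ mu (B n) < (/2)^(S n).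

Lemma V_anti B j m x : (j <= m)%nat -> V B m x -> V B j x.
Proof. intros H [n [Hn Hb]]. exists n; split; auto; lia. Qed.

Lemma SV Sg mu B k : sigma_algebra Sg -> goodB Sg mu B -> Sg (V B k).
Proof. intros HS HB. apply (sa_union _ HS). intro n. apply S_cond; auto. apply HB. Qed.

Lemma SL Sg mu B : sigma_algebra Sg -> goodB Sg mu B -> Sg (Lset B).
Proof. intros HS HB. unfold Lset. apply (S_all Sg (fun k => V B k)); auto. intro; eapply SV; eauto. Qed.

Lemma SW Sg mu B k : sigma_algebra Sg -> goodB Sg mu B -> Sg (W B k).
Proof. intros HS HB. unfold W. apply S_and; auto. eapply SV; eauto. apply S_not; auto. eapply SL; eauto. Qed.

Lemma SD Sg mu B k : sigma_algebra Sg -> goodB Sg mu B -> Sg (D B k).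
Proof. intros HS HB. unfold D. apply S_and; auto. eapply SV; eauto. apply S_not; auto. eapply SV; eauto. Qed.

Lemma muV Sg mu B k : sigma_algebra Sg -> finite_measure Sg mu -> goodB Sg mu B -> mu (V B k) <= (/2)^k.
Proof.
  intros HS Hm HB.
  replace (V B k) with (fun x => exists n, (fun n => B (k + n)%nat) n x).
  - apply (mu_subadd Sg mu _ (fun n => (/2)^(S (k+n)))); auto.
    + intro n; apply HB.
    + intro n; left; apply HB.
    + intro N. rewrite geom_sum. pose proof (half_pow_pos (S (k+N))). lra.
  - apply pred_ext; intro x; split.
    + intros [n Hn]. exists (k+n)%nat; split; auto; lia.
    + intros [n [Hn Hb]]. exists (n - k)%nat. replace (k + (n-k))%nat with n by lia; auto.
Qed.

Lemma muL Sg mu B : sigma_algebra Sg -> finite_measure Sg mu -> goodB Sg mu B -> mu (Lset B) = 0.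
Proof.
  intros HS Hm HB.
  assert (H0 : 0 <= mu (Lset B)) by (apply (fm_nonneg _ _ Hm); eapply SL; eauto).
  assert (Hk : forall k, mu (Lset B) <= (/2)^k).
  { intro k. apply Rle_trans with (mu (V B k)). apply (mu_mono Sg); [auto|auto|eapply SL; eauto|eapply SV; eauto|intros x Hx; apply Hx]. eapply muV; eauto. }
  destruct (Rle_lt_dec (mu (Lset B)) 0) as [h|h]; [lra|].
  destruct (pow_lt_1_zero (/2)) with (y := mu (Lset B)) as [N HN]; auto.
  rewrite Rabs_pos_eq; lra.
  specialize (HN N (le_n N)). specialize (Hk N). rewrite Rabs_pos_eq in HN. lra.
  left; apply half_pow_pos.
Qed.

Definition T (mu : (X -> Prop) -> R) B k := mu (W B k).

Lemma T_mono Sg mu B k m : sigma_algebra Sg -> finite_measure Sg mu -> goodB Sg mu B ->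
  (k <= m)%nat -> T mu B m <= T mu B k.
Proof.
  intros HS Hm HB Hkm. unfold T. apply (mu_mono Sg); [auto|auto|eapply SW; eauto|eapply SW; eauto|].
  intros x [Hv Hl]; split; auto. eapply V_anti; eauto.
Qed.

Lemma T_le Sg mu B k : sigma_algebra Sg -> finite_measure Sg mu -> goodB Sg mu B ->
  T mu B k <= (/2)^k.
Proof.
  intros HS Hm HB. apply Rle_trans with (mu (V B k)). unfold T. apply (mu_mono Sg); [auto|auto|eapply SW; eauto|eapply SV; eauto|intros x [h _]; auto]. eapply muV; eauto.
Qed.

Lemma T_pos Sg mu B k : sigma_algebra Sg -> finite_measure Sg mu -> goodB Sg mu B ->
  0 < T mu B k.
Proof.
  intros HS Hm HB.
  assert (E : mu (V B k) = mu (W B k) + mu (fun x => V B k x /\ Lset B x)).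
  { replace (V B k) with (fun x => W B k x \/ (fun x => V B k x /\ Lset B x) x) at 1.
    - apply (mu_add2 Sg); auto. eapply SW; eauto. apply S_and; auto. eapply SV; eauto. eapply SL; eauto.
      intros x [_ h1] [_ h2]; auto.
    - apply pred_ext; intro x; split.
      + intros [[h _]|[h _]]; auto.
      + intro h. destruct (classic (Lset B x)); [right|left]; split; auto. }
  assert (E2 : mu (fun x => V B k x /\ Lset B x) <= 0).
  { rewrite <- (muL Sg mu B); auto. apply (mu_mono Sg); [auto|auto| |eapply SL; eauto|intros x [_ h]; auto].
    apply S_and; auto. eapply SV; eauto. eapply SL; eauto. }
  assert (E3 : mu (B k) <= mu (V B k)).
  { apply (mu_mono Sg); [auto|auto|apply HB|eapply SV; eauto|intros x h; exists k; auto]. }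
  destruct (HB k) as [_ [h _]]. unfold T. lra.
Qed.

Lemma T_small Sg mu B : sigma_algebra Sg -> finite_measure Sg mu -> goodB Sg mu B ->
  forall rho, 0 < rho -> exists k, T mu B k < rho.
Proof.
  intros HS Hm HB rho Hr.
  destruct (pow_lt_1_zero (/2)) with (y := rho) as [N HN]; auto.
  rewrite Rabs_pos_eq; lra.
  exists N. specialize (HN N (le_n N)). rewrite Rabs_pos_eq in HN.
  pose proof (T_le Sg mu B N HS Hm HB). lra. left; apply half_pow_pos.
Qed.

Definition fdef B (c : nat -> R) (x : X) : R :=
  match excluded_middle_informative (exists k, D B k x) with
  | left H => c (proj1_sig (constructive_indefinite_description _ H))
  | right _ => 0
  end.

Lemma D_unique B k m x : D B k x -> D B m x -> k = m.
Proof.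
  intros [Hk Hk'] [Hm Hm']. destruct (Nat.lt_trichotomy k m) as [h|[h|h]]; auto.
  - exfalso. apply Hk'. eapply V_anti; eauto.
  - exfalso. apply Hm'. eapply V_anti; eauto.
Qed.

Lemma f_D B c k x : D B k x -> fdef B c x = c k.
Proof.
  intro H. unfold fdef. destruct excluded_middle_informative as [h|h].
  - destruct constructive_indefinite_description as [m Hm]; simpl. f_equal. eapply D_unique; eauto.
  - exfalso; apply h; exists k; auto.
Qed.

Lemma f_nD B c x : ~ (exists k, D B k x) -> fdef B c x = 0.
Proof. intro H. unfold fdef. destruct excluded_middle_informative as [h|h]; tauto. Qed.

Lemma f_cases B c x : (exists k, D B k x /\ fdef B c x = c k) \/ fdef B c x = 0.
Proof.
  destruct (classic (exists k, D B k x)) as [[k Hk]|h].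
  - left; exists k; split; auto. apply f_D; auto.
  - right; apply f_nD; auto.
Qed.

Lemma W_has_D B k x : W B k x -> exists m, (k <= m)%nat /\ D B m x.
Proof.
  intros [Hv Hl]. apply NNPP. intro Hno. apply Hl.
  assert (Hall : forall n, V B (k + n) x).
  { induction n. rewrite Nat.add_0_r; auto.
    rewrite Nat.add_succ_r. apply NNPP. intro hv. apply Hno. exists (k+n)%nat. split; [lia|]. split; auto. }
  intro j. apply (V_anti B j (k + j)); auto. lia.
Qed.
Definition cpos (c : nat -> R) := (forall k, 0 < c k) /\ (forall k m, (k <= m)%nat -> c k <= c m).

Lemma f_nonneg B c x : cpos c -> 0 <= fdef B c x.
Proof.
  intros [Hc _]. destruct (f_cases B c x) as [[k [_ ->]]| ->]; [left; auto|lra].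
Qed.

Lemma D_W B m x : D B m x -> W B m x.
Proof. intros [Hv Hn]. split; auto. Qed.

Lemma f_i B c k y x : cpos c -> y < c k -> W B k x -> y < fdef B c x.
Proof.
  intros [Hc Hcm] Hy Hw. destruct (W_has_D B k x Hw) as [m [Hkm Hd]].
  rewrite (f_D B c m x Hd). specialize (Hcm k m Hkm). lra.
Qed.

Lemma f_pos_D B c y x : cpos c -> 0 <= y -> y < fdef B c x -> exists m, D B m x /\ fdef B c x = c m.
Proof.
  intros Hc Hy H. destruct (f_cases B c x) as [h|h]; auto. lra.
Qed.

Lemma f_ii B c k y x : cpos c -> c k <= y -> y < fdef B c x -> W B (S k) x.
Proof.
  intros Hc Hy H. pose proof (proj1 Hc k).
  destruct (f_pos_D B c y x Hc ltac:(lra) H) as [m [Hd He]].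
  destruct (le_lt_dec m k) as [h|h].
  - pose proof (proj2 Hc m k h). lra.
  - apply D_W in Hd. destruct Hd as [Hv Hl]. split; auto. eapply V_anti; eauto.
Qed.

Lemma f_iii B c y x : cpos c -> 0 <= y -> y < fdef B c x -> W B 0 x.
Proof.
  intros Hc Hy H. destruct (f_pos_D B c y x Hc Hy H) as [m [Hd He]].
  apply D_W in Hd. destruct Hd as [Hv Hl]. split; auto. apply (V_anti B 0 m); auto; lia.
Qed.

Lemma Sf Sg mu B c y : sigma_algebra Sg -> goodB Sg mu B -> cpos c -> Sg (fun x => y < fdef B c x).
Proof.
  intros HS HB Hc. destruct (Rlt_le_dec y 0) as [h|h].
  - replace (fun x => y < fdef B c x) with (fun _ : X => True). apply (sa_full _ HS).
    apply pred_ext; intro x; split; auto. intros _. pose proof (f_nonneg B c x Hc). lra.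
  - replace (fun x => y < fdef B c x) with (fun x => exists m, (fun m x => y < c m /\ D B m x) m x).
    + apply (sa_union _ HS). intro m. apply S_cond; auto. eapply SD; eauto.
    + apply pred_ext; intro x; split.
      * intros [m [Hy Hd]]. rewrite (f_D B c m x Hd); auto.
      * intro H. destruct (f_pos_D B c y x Hc h H) as [m [Hd He]]. exists m. rewrite <- He. auto.
Qed.

Lemma distrib_eq mu B c y : cpos c -> distrib mu (fdef B c) y = mu (fun x => y < fdef B c x).
Proof.
  intros Hc. unfold distrib. f_equal. apply pred_ext; intro x. rewrite Rabs_pos_eq. tauto. apply f_nonneg; auto.
Qed.

Lemma lam_i Sg mu B c k y : sigma_algebra Sg -> finite_measure Sg mu -> goodB Sg mu B -> cpos c ->
  y < c k -> T mu B k <= distrib mu (fdef B c) y.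
Proof.
  intros HS Hm HB Hc Hy. rewrite distrib_eq; auto. unfold T.
  apply (mu_mono Sg); [auto|auto|eapply SW; eauto|eapply Sf; eauto|].
  intros x Hx. eapply f_i; eauto.
Qed.

Lemma lam_ii Sg mu B c k y : sigma_algebra Sg -> finite_measure Sg mu -> goodB Sg mu B -> cpos c ->
  c k <= y -> distrib mu (fdef B c) y <= T mu B (S k).
Proof.
  intros HS Hm HB Hc Hy. rewrite distrib_eq; auto. unfold T.
  apply (mu_mono Sg); [auto|auto|eapply Sf; eauto|eapply SW; eauto|].
  intros x Hx. eapply f_ii; eauto.
Qed.

Lemma lam_iii Sg mu B c y : sigma_algebra Sg -> finite_measure Sg mu -> goodB Sg mu B -> cpos c ->
  0 <= y -> distrib mu (fdef B c) y <= T mu B 0.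
Proof.
  intros HS Hm HB Hc Hy. rewrite distrib_eq; auto. unfold T.
  apply (mu_mono Sg); [auto|auto|eapply Sf; eauto|eapply SW; eauto|].
  intros x Hx. eapply f_iii; eauto.
Qed.

Lemma Rinf_eq E m : is_glb E m -> Rinf E = m.
Proof.
  intros Hm. unfold Rinf. destruct excluded_middle_informative as [h|h].
  - destruct constructive_indefinite_description as [m' Hm']; simpl.
    destruct Hm as [H1 H2]; destruct Hm' as [H1' H2'].
    apply Rle_antisym; auto.
  - exfalso; apply h; exists m; auto.
Qed.

Lemma fstar0 Sg mu B c t : sigma_algebra Sg -> finite_measure Sg mu -> goodB Sg mu B -> cpos c ->
  T mu B 0 <= t -> fstar mu (fdef B c) t = 0.
Proof.
  intros HS Hm HB Hc Ht. unfold fstar. apply Rinf_eq. split.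
  - intros y [Hy _]; lra.
  - intros b Hb. destruct (Rle_lt_dec b 0) as [h|h]; auto.
    assert (b <= b/2); [|lra]. apply Hb. split; [lra|].
    eapply Rle_trans; [eapply lam_iii; eauto; lra|auto].
Qed.

Lemma fstark Sg mu B c k t : sigma_algebra Sg -> finite_measure Sg mu -> goodB Sg mu B -> cpos c ->
  T mu B (S k) <= t < T mu B k -> fstar mu (fdef B c) t = c k.
Proof.
  intros HS Hm HB Hc Ht. unfold fstar. apply Rinf_eq. split.
  - intros y [Hy Hl]. destruct (Rlt_le_dec y (c k)) as [h|h]; auto.
    pose proof (lam_i Sg mu B c k y HS Hm HB Hc h). lra.
  - intros b Hb. apply Hb. split. apply Hc.
    eapply Rle_trans; [apply (lam_ii Sg mu B c k); auto; lra|lra].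
Qed.
From Coquelicot Require Import Coquelicot.

Lemma Rpower_pos x y : 0 < Rpower x y.
Proof. unfold Rpower; apply exp_pos. Qed.

Lemma Rpower_1base y : Rpower 1 y = 1.
Proof. unfold Rpower. rewrite ln_1, Rmult_0_r, exp_0. auto. Qed.

Lemma Rpow_neg_anti x y a : 0 < x <= y -> 0 <= a -> Rpower y (-a) <= Rpower x (-a).
Proof.
  intros Hxy Ha. rewrite !Rpower_Ropp. apply Rinv_le_contravar. apply Rpower_pos.
  apply Rle_Rpower_l; auto.
Qed.

Lemma Rpow_neg_ge1 x a : 0 < x <= 1 -> 0 <= a -> 1 <= Rpower x (-a).
Proof.
  intros Hx Ha. rewrite <- (Rpower_1base (-a)). apply Rpow_neg_anti; auto; lra.
Qed.

Lemma rpow_pos_eq x y : 0 < x -> rpow x y = Rpower x y.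
Proof. intros H. unfold rpow. destruct Rle_dec; auto; lra. Qed.

Lemma rpow_0 y : rpow 0 y = 0.
Proof. unfold rpow. destruct Rle_dec; auto; lra. Qed.

Lemma rpow_nonneg x y : 0 <= rpow x y.
Proof. unfold rpow. destruct Rle_dec; [lra|left; apply Rpower_pos]. Qed.

Lemma cont_Rpower e z : 0 < z -> continuous (fun t => Rpower t e) z.
Proof.
  intros Hz. apply continuity_pt_filterlim. apply derivable_continuous_pt.
  exists (e * Rpower z (e - 1)). apply derivable_pt_lim_power; auto.
Qed.

Definition gstruct (T : nat -> R) (a : R) (g : R -> R) :=
  (forall k, 0 < T k /\ T k <= 1) /\
  (forall k m, (k <= m)%nat -> T m <= T k) /\
  (forall rho, 0 < rho -> exists k, T k < rho) /\
  (forall t, T 0%nat <= t -> g t = 0) /\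
  (forall k t, T (S k) <= t < T k -> g t = Rpower (T k) (-a)).

Lemma pieces T a g t : gstruct T a g -> 0 < t -> T 0%nat <= t \/ exists k, T (S k) <= t < T k.
Proof.
  intros [H1 [H2 [H3 _]]] Ht. apply NNPP. intro Hno.
  assert (Hall : forall n, t < T n).
  { induction n.
    - destruct (Rle_lt_dec (T 0%nat) t); auto. exfalso; apply Hno; auto.
    - destruct (Rle_lt_dec (T (S n)) t); auto. exfalso; apply Hno; right; exists n; lra. }
  destruct (H3 t Ht) as [k Hk]. specialize (Hall k). lra.
Qed.

Lemma g_low T a g k t : gstruct T a g -> 0 <= a -> 0 < t < T k -> Rpower (T k) (-a) <= g t.
Proof.
  intros HG Ha Ht. destruct (pieces T a g t HG ltac:(lra)) as [h|[j Hj]].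
  - exfalso. pose proof (proj1 (proj2 HG) 0%nat k (Nat.le_0_l k)). lra.
  - destruct HG as [H1 [H2 [H3 [H4 H5]]]]. rewrite (H5 j t Hj).
    destruct (le_lt_dec k j) as [h|h].
    + apply Rpow_neg_anti; auto. split. apply H1. auto.
    + exfalso. pose proof (H2 (S j) k h). lra.
Qed.

Lemma g_cases T a g t : gstruct T a g -> 0 <= a -> 0 < t ->
  g t = 0 \/ (1 <= g t /\ g t <= Rpower t (-a) /\ exists k, t < T k /\ g t = Rpower (T k) (-a)).
Proof.
  intros HG Ha Ht. destruct (pieces T a g t HG Ht) as [h|[j Hj]].
  - left. apply HG; auto.
  - right. destruct HG as [H1 [H2 [H3 [H4 H5]]]]. rewrite (H5 j t Hj). split; [|split].
    + apply Rpow_neg_ge1; [apply H1|auto].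
    + apply Rpow_neg_anti; [lra|auto].
    + exists j; split; [lra|auto].
Qed.

Definition Fint (al be : R) (g : R -> R) (t : R) := rpow t al * rpow (g t) be.

Lemma int_F T a g al be : gstruct T a g ->
  forall k a0, T k <= a0 <= 1 -> ex_RInt (Fint al be g) a0 1.
Proof.
  intros HG. pose proof HG as [H1 [H2 [H3 [H4 H5]]]]. induction k; intros a0 Ha0.
  - apply (ex_RInt_ext (V := R_NormedModule) (fun _ : R => 0%R)). 2: apply ex_RInt_const.
    intros x Hx. rewrite Rmin_left in Hx by lra. rewrite Rmax_right in Hx by lra.
    unfold Fint. rewrite H4 by lra. rewrite rpow_0, Rmult_0_r. reflexivity.
  - destruct (Rle_lt_dec (T k) a0) as [h|h].
    + apply IHk; lra.
    + apply (ex_RInt_Chasles _ a0 (T k) 1).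
      2: apply IHk; split; [lra|apply H1].
      pose proof (H1 (S k)) as [HT _].
      apply (ex_RInt_ext (fun t => Rpower t al * rpow (Rpower (T k) (-a)) be)).
      * intros x Hx. rewrite Rmin_left in Hx by lra. rewrite Rmax_right in Hx by lra.
        unfold Fint. rewrite (H5 k x) by lra. rewrite (rpow_pos_eq x al) by lra. reflexivity.
      * apply (ex_RInt_continuous (V := R_CompleteNormedModule)). intros z Hz.
        rewrite Rmin_left in Hz by lra. rewrite Rmax_right in Hz by lra.
        apply (continuous_mult (fun t => Rpower t al) (fun _ => rpow (Rpower (T k) (-a)) be)).
        apply cont_Rpower; lra. apply continuous_const.
Qed.

Lemma int_F_delta T a g al be d : gstruct T a g -> 0 < d <= 1 -> ex_RInt (Fint al be g) d 1.
Proof.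
  intros HG Hd. destruct (proj1 (proj2 (proj2 HG)) d ltac:(lra)) as [k Hk].
  apply (int_F T a g al be HG k). lra.
Qed.

Lemma int_pow e d : 0 < e + 1 -> 0 < d <= 1 ->
  ex_RInt (fun t => Rpower t e) d 1 /\ RInt (fun t => Rpower t e) d 1 <= / (e + 1).
Proof.
  intros He Hd.
  pose (G := fun t => / (e+1) * Rpower t (e+1)).
  assert (H : is_RInt (fun t => Rpower t e) d 1 (minus (G 1) (G d))).
  { apply (is_RInt_derive (V := R_CompleteNormedModule) G).
    - intros x Hx. rewrite Rmin_left in Hx by lra. rewrite Rmax_right in Hx by lra.
      apply is_derive_Reals.
      replace (Rpower x e) with (/ (e+1) * ((e+1) * Rpower x (e+1-1))).
      apply (derivable_pt_lim_scal (fun t => Rpower t (e+1))). apply derivable_pt_lim_power; lra.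
      replace (e+1-1) with e by ring. field. lra.
    - intros x Hx. rewrite Rmin_left in Hx by lra. rewrite Rmax_right in Hx by lra.
      apply cont_Rpower; lra. }
  split. eexists; eauto.
  rewrite (is_RInt_unique _ _ _ _ H). change (minus (G 1) (G d)) with (G 1 - G d). unfold G.
  rewrite Rpower_1base. pose proof (Rpower_pos d (e+1)).
  assert (0 < / (e+1)) by (apply Rinv_0_lt_compat; lra).
  assert (0 < / (e+1) * Rpower d (e+1)) by (apply Rmult_lt_0_compat; lra). lra.
Qed.
Lemma Fint_nonneg al be g t : 0 <= Fint al be g t.
Proof. unfold Fint. apply Rmult_le_pos; apply rpow_nonneg. Qed.

Lemma P1_bound T a g al be q d : gstruct T a g -> 0 < a -> 0 < be <= q ->
  0 < al - a * q + 1 -> 0 < d <= 1 ->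
  ex_RInt (Fint al be g) d 1 /\ 0 <= RInt (Fint al be g) d 1 /\
  RInt (Fint al be g) d 1 <= / (al - a * q + 1).
Proof.
  intros HG Ha Hbe He Hd.
  pose proof (int_F_delta T a g al be d HG Hd) as Hex.
  destruct (int_pow (al - a*q) d He Hd) as [Hex2 Hle].
  split; [auto|split].
  - apply RInt_ge_0; auto; try lra. intros; apply Fint_nonneg.
  - eapply Rle_trans; [|apply Hle]. apply RInt_le; auto; try lra.
    intros t Ht. unfold Fint. rewrite (rpow_pos_eq t al) by lra.
    destruct (g_cases T a g t HG ltac:(lra) ltac:(lra)) as [h|[h1 [h2 _]]].
    + rewrite h, rpow_0, Rmult_0_r. left; apply Rpower_pos.
    + rewrite (rpow_pos_eq (g t) be) by lra.
      replace (al - a * q) with (al + (-a * q)) by ring. rewrite Rpower_plus.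
      apply Rmult_le_compat_l. left; apply Rpower_pos.
      apply Rle_trans with (Rpower (g t) q). apply Rle_Rpower; lra.
      rewrite <- Rpower_mult. apply Rle_Rpower_l; lra.
Qed.

Lemma P2_lower T a g al be k : gstruct T a g -> 0 <= a -> 0 <= al -> 0 < be ->
  ex_RInt (Fint al be g) (T k / 2) 1 ->
  (T k - T k / 2) * (Rpower (T k / 2) al * Rpower (Rpower (T k) (-a)) be) <= RInt (Fint al be g) (T k / 2) 1.
Proof.
  intros HG Ha Hal Hbe Hex.
  destruct (proj1 HG k) as [HT0 HT1].
  assert (E1 : ex_RInt (Fint al be g) (T k / 2) (T k)) by (apply (ex_RInt_Chasles_1 (V := R_CompleteNormedModule) _ _ _ 1); auto; lra).
  assert (E2 : ex_RInt (Fint al be g) (T k) 1) by (apply (ex_RInt_Chasles_2 (V := R_CompleteNormedModule) _ (T k / 2)); auto; lra).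
  rewrite <- (RInt_Chasles (V := R_CompleteNormedModule) _ _ _ _ E1 E2). change (plus ?x ?y) with (x + y).
  assert (0 <= RInt (Fint al be g) (T k) 1).
  { apply RInt_ge_0; auto. intros; apply Fint_nonneg. }
  assert ((T k - T k / 2) * (Rpower (T k / 2) al * Rpower (Rpower (T k) (-a)) be) <= RInt (Fint al be g) (T k / 2) (T k)); [|lra].
  rewrite <- (RInt_const (V := R_CompleteNormedModule)).
  apply RInt_le; auto. lra. apply ex_RInt_const.
  intros t Ht. unfold Fint. rewrite (rpow_pos_eq t al) by lra.
  pose proof (g_low T a g k t HG Ha ltac:(lra)) as Hg.
  pose proof (Rpower_pos (T k) (-a)).
  rewrite (rpow_pos_eq (g t) be) by lra.
  apply Rmult_le_compat; try (left; apply Rpower_pos).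
  apply Rle_Rpower_l; lra. apply Rle_Rpower_l; lra.
Qed.
Lemma rpow_bound Z L th : 0 <= Z <= L -> 0 < th <= 1 -> rpow Z th <= 1 + L.
Proof.
  intros HZ Hth. unfold rpow. destruct Rle_dec as [h|h]; [lra|].
  destruct (Rle_lt_dec Z 1) as [h1|h1].
  - apply Rle_trans with (Rpower 1 th). apply Rle_Rpower_l; lra. rewrite Rpower_1base; lra.
  - apply Rle_trans with (Rpower Z 1). apply Rle_Rpower; lra. rewrite Rpower_1; lra.
Qed.

Lemma Rpow_neg_strict x y g : 0 < x < y -> 0 < g -> Rpower y (-g) < Rpower x (-g).
Proof.
  intros Hxy Hg. rewrite !Rpower_Ropp. apply Rinv_lt_contravar.
  apply Rmult_lt_0_compat; apply Rpower_pos. apply Rlt_Rpower_l; auto.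
Qed.

Lemma algebra_lb t a al be : 0 < t ->
  (t - t / 2) * (Rpower (t / 2) al * Rpower (Rpower t (-a)) be)
  = Rpower (/2) (1 + al) * Rpower t (-(a * be - (1 + al))).
Proof.
  intros Ht.
  replace (t - t/2) with (Rpower (t/2) 1) by (rewrite Rpower_1; lra).
  rewrite <- Rmult_assoc, <- Rpower_plus. rewrite Rpower_mult.
  replace (t/2) with (t * /2) by (unfold Rdiv; ring).
  rewrite <- Rpower_mult_distr by lra.
  replace (-(a*be - (1+al))) with ((1 + al) + (-a*be)) by ring.
  rewrite (Rpower_plus (1+al) (-a*be) t), (Rpower_plus 1 al t). ring.
Qed.

Theorem theorem3p5 (p q r s : R) (Sigma : (X -> Prop) -> Prop) (mu : (X -> Prop) -> R) :
  1 < q -> q <= p -> p < r -> r <= s ->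
  sigma_algebra Sigma -> finite_measure Sigma mu ->
  (forall f : X -> R, in_GL Sigma mu p q f -> in_GL Sigma mu r s f) ->
  exists M : R, 0 < M /\ forall A : X -> Prop, Sigma A -> 0 < mu A -> M <= mu A.
Proof.
  intros Hq Hqp Hpr Hrs HS Hm Hinc.
  apply NNPP; intro Hno.
  assert (Hsmall : forall M, 0 < M -> exists A, Sigma A /\ 0 < mu A /\ mu A < M).
  { intros M HM. apply NNPP; intro h. apply Hno. exists M. split; auto.
    intros A HA HA0. apply Rnot_lt_le. intro hl. apply h. exists A. auto. }
  pose (B := fun n => proj1_sig (constructive_indefinite_description _ (Hsmall ((/2)^(S n)) (half_pow_pos (S n))))).
  assert (HB : goodB Sigma mu B).
  { intro n. unfold B. destruct constructive_indefinite_description as [A HA]; simpl; auto. }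
  assert (Hip : / r < / p) by (apply Rinv_lt_contravar; [apply Rmult_lt_0_compat|]; lra).
  assert (Hp0 : 0 < / p) by (apply Rinv_0_lt_compat; lra).
  assert (Hr0 : 0 < / r) by (apply Rinv_0_lt_compat; lra).
  set (a := (/p + /r)/2).
  assert (Ha0 : 0 < a) by (unfold a; lra).
  assert (Ha1 : a < / p) by (unfold a; lra).
  assert (Ha2 : / r < a) by (unfold a; lra).
  set (Tk := T mu B).
  set (c := fun k => Rpower (Tk k) (-a)).
  assert (HTp : forall k, 0 < Tk k /\ Tk k <= 1).
  { intro k. split. apply (T_pos Sigma); auto.
    eapply Rle_trans. apply (T_le Sigma); auto. apply half_pow_le1. }
  assert (Hc : cpos c).
  { split. intro; apply Rpower_pos. intros k m Hkm. unfold c. apply Rpow_neg_anti; [|lra].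
    split. apply HTp. apply (T_mono Sigma); auto. }
  set (f := fdef B c).
  set (g := fstar mu f).
  assert (HG : gstruct Tk a g).
  { split; [auto|split; [|split; [|split]]].
    - intros k m Hkm. apply (T_mono Sigma); auto.
    - apply (T_small Sigma); auto.
    - intros t Ht. apply (fstar0 Sigma); auto.
    - intros k t Ht. apply (fstark Sigma mu B c k t); auto. }
  assert (Hin : in_GL Sigma mu p q f).
  { split.
    - intro y. apply (Sf Sigma mu); auto.
    - exists (1 + q / p * (q - 1) * / (q/p - 1 - a * q + 1)).
      intros eps He d Hd.
      assert (Hq1 : 0 < q/p - 1 - a*q + 1).
      { replace (q/p - 1 - a*q + 1) with (q * (/p - a)) by (unfold Rdiv; ring).
        apply Rmult_lt_0_compat; lra. }
      destruct (P1_bound Tk a g (q/p-1) (q-eps) q d HG Ha0 ltac:(lra) Hq1 ltac:(lra)) as [Hex [H0 H1]].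
      exists (ex_RInt_Reals_0 _ _ _ Hex). rewrite <- RInt_Reals.
      change (gl_integrand mu p q eps f) with (Fint (q/p-1) (q-eps) g).
      apply rpow_bound.
      + assert (0 < q / p) by (unfold Rdiv; apply Rmult_lt_0_compat; lra).
        split.
        * apply Rmult_le_pos; [apply Rmult_le_pos; lra | exact H0].
        * apply Rmult_le_compat; [apply Rmult_le_pos; lra | exact H0 | apply Rmult_le_compat_l; lra | exact H1].
      + split. apply Rdiv_lt_0_compat; lra.
        unfold Rdiv. rewrite Rmult_1_l. rewrite <- Rinv_1. apply Rinv_le_contravar; lra. }
  destruct (Hinc f Hin) as [_ [C HC]].
  set (e0 := Rmin ((s - 1)/2) (s * (a - / r) / (2 * a))).
  assert (Hr1 : 0 < s * (a - / r)) by (apply Rmult_lt_0_compat; lra).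
  assert (He0 : 0 < e0).
  { unfold e0. apply Rmin_glb_lt. lra. apply Rdiv_lt_0_compat; lra. }
  assert (He1 : e0 < s - 1) by (unfold e0; pose proof (Rmin_l ((s - 1)/2) (s * (a - / r) / (2 * a))); lra).
  assert (He2 : a * e0 <= s * (a - / r) / 2).
  { unfold e0. pose proof (Rmin_r ((s - 1)/2) (s * (a - / r) / (2 * a))).
    apply Rle_trans with (a * (s * (a - / r) / (2 * a))). apply Rmult_le_compat_l; lra.
    right. field. lra. }
  set (be := s - e0).
  set (al := s / r - 1).
  assert (Hsr : 1 <= s / r).
  { unfold Rdiv. apply Rle_trans with (r * / r). rewrite Rinv_r; lra. apply Rmult_le_compat_r; lra. }
  set (gam := a * be - (1 + al)).
  assert (Hgam : 0 < gam).
  { unfold gam, be, al. replace (a * (s - e0) - (1 + (s / r - 1))) with (s * (a - / r) - a * e0) by (unfold Rdiv; ring).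
    lra. }
  set (Wc := Rpower (Rmax C 1) be).
  assert (HW1 : 1 <= Wc).
  { unfold Wc. apply Rle_trans with (Rpower 1 be). rewrite Rpower_1base; lra.
    apply Rle_Rpower_l. unfold be; lra. split. lra. apply Rmax_r. }
  set (kap := s / r * e0 * Rpower (/2) (1 + al)).
  assert (Hkap : 0 < kap).
  { unfold kap. apply Rmult_lt_0_compat. apply Rmult_lt_0_compat; lra. apply Rpower_pos. }
  set (rho := Rpower (Wc / kap) (- / gam)).
  destruct (T_small Sigma mu B HS Hm HB rho (Rpower_pos _ _)) as [k Hk].
  destruct (HTp k) as [Hk0 Hk1].
  destruct (HC e0 ltac:(lra) (Tk k / 2) ltac:(lra)) as [pr Hpr'].
  pose proof (ex_RInt_Reals_1 _ _ _ pr) as Hex.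
  rewrite <- RInt_Reals in Hpr'.
  pose proof (P2_lower Tk a g al be k HG ltac:(lra) ltac:(unfold al; lra) ltac:(unfold be; lra) Hex) as Hlow.
  change (gl_integrand mu r s e0 f) with (Fint (s/r - 1) (s - e0) g) in Hpr'.
  fold al be in Hpr'.
  rewrite algebra_lb in Hlow by lra. fold gam in Hlow.
  assert (Hst : Rpower rho (- gam) < Rpower (Tk k) (- gam)) by (apply Rpow_neg_strict; auto; split; auto).
  assert (Hrho : Rpower rho (- gam) = Wc / kap).
  { unfold rho. rewrite Rpower_mult. replace (- / gam * - gam) with 1 by (field; lra).
    apply Rpower_1. apply Rdiv_lt_0_compat; lra. }
  set (I := RInt (Fint al be g) (Tk k / 2) 1) in *.
  assert (HZ : Wc < s / r * e0 * I).
  { apply Rlt_le_trans with (kap * Rpower (Tk k) (- gam)).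
    - replace Wc with (kap * (Wc / kap)) by (field; lra). apply Rmult_lt_compat_l; lra.
    - unfold kap. rewrite Rmult_assoc. apply Rmult_le_compat_l. apply Rmult_le_pos; lra. lra. }
  rewrite rpow_pos_eq in Hpr' by lra.
  assert (Hbe : 0 < be) by (unfold be; lra).
  assert (Hfin : Rpower Wc (1 / be) < Rpower (s / r * e0 * I) (1 / be)).
  { apply Rlt_Rpower_l. apply Rdiv_lt_0_compat; lra. lra. }
  unfold Wc in Hfin. rewrite Rpower_mult in Hfin. replace (be * (1 / be)) with 1 in Hfin by (field; lra).
  rewrite Rpower_1 in Hfin. pose proof (Rmax_l C 1). lra.
  pose proof (Rmax_r C 1). lra.
Qed.
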